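(* Let $n\ge2$, $v\in\tilde{S}_n$ and $r\in\mathbb{Z}$. Let $R(\Psi^+_r(v))$ denote the set of all reduced words of all elements of $\Psi^+_r(v)$ and $R(\Psi^-_r(v))$ the set of all reduced words of all elements of $\Psi^-_r(v)$, each reduced word $a$ of an element $w\gtrdot v$ being regarded as the reduced $v$-marked word $(a,i)$ with $i$ the unique index such that deleting $a_i$ gives a reduced word of $v$. Then the map $\phi^v$ restricts to a bijection $\phi^v_r: R(\Psi^+_r(v))\to R(\Psi^-_r(v))$.
   Context: $\tilde{S}_n$ is the affine symmetric group: bijections $w:\mathbb{Z}\to\mathbb{Z}$ with $w(i+n)=w(i)+n$ and $\sum_{i=1}^n w(i)=\sum_{i=1}^n i$, a Coxeter group with simple reflections $s_0,\dots,s_{n-1}$ ($s_i$ swaps $i+kn$ and $i+1+kn$ for all $k$). For $r\not\equiv s\pmod n$, $t_{r,s}$ is the unique element swapping $r$ and $s$ and fixing every integer not congruent to $r$ or $s$ mod $n$. $\ell$ is Coxeter length, $R(w)$ the set of reduced words of $w$ (words in letters $\{0,\dots,n-1\}$). $v\lessdot w$ means $w=vt_{p,q}$ for some reflection $t_{p,q}$ and $\ell(w)=\ell(v)+1$. $\Psi^+_r(v)$ is the set of $w$ with $v\lessdot w$ and $w=vt_{r,s}$ for some $s>r$; $\Psi^-_r(v)$ is the set of $w$ with $v\lessdot w$ and $w=vt_{s,r}$ for some $s<r$. (For $w\gtrdot v$ and $a\in R(w)$ there is a unique index $i$ such that deleting $a_i$ gives a word in $R(v)$.) A $v$-marked word is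 a pair $(a,i)$ with $a=a_1\cdots a_l$ a word in letters $\{0,\dots,n-1\}$ and $i\in[1,l]$ such that $a_1\cdots\widehat{a_i}\cdots a_l\in R(v)$; it is reduced if $a$ is a reduced word. The affine Little graph has the $v$-marked words as vertices and, from each $(a,i)$, a unique edge $(a,i)\to(a',j)$, where $a'$ is obtained from $a$ by replacing $a_i$ by $a_i-1$ (mod $n$), and $j=i$ if $a'$ is reduced, while otherwise $j$ is the unique index $j\ne i$ with $a'_1\cdots\widehat{a'_j}\cdots a'_l\in R(v)$ (which exists and is unique). Every vertex has exactly one incoming edge, so the components are finite directed cycles. For a reduced $v$-marked word $(a,i)$, $\phi^v(a,i)$ is the first reduced $v$-marked word strictly after $(a,i)$ along its cycle. *)

(* Defs.v *)
(* Affine symmetric group \tilde S_n realized as functions int -> int. *)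
From mathcomp Require Import all_boot all_order all_algebra.
Set Implicit Arguments. Unset Strict Implicit. Unset Printing Implicit Defensive.
Import Order.TTheory GRing.Theory Num.Theory.
Local Open Scope ring_scope.

Definition in_affS (n : nat) (w : int -> int) : Prop :=
  bijective w /\ (forall x : int, w (x + n%:Z) = w x + n%:Z) /\
  \sum_(1 <= i < n.+1) w (i%:Z) = \sum_(1 <= i < n.+1) (i%:Z : int).

Definition cong (n : nat) (x y : int) : bool := ((x %% n%:Z)%Z == (y %% n%:Z)%Z).

Definition sref (n i : nat) (x : int) : int :=
  if cong n x (i%:Z) then x + 1
  else if cong n x (i.+1%:Z) then x - 1 else x.

Definition tref (n : nat) (r s : int) (x : int) : int :=
  if cong n x r then x + (s - r)
  else if cong n x s then x - (s - r) else x.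

Definition word_ok (n : nat) (a : seq nat) : bool := all (fun k => (k < n)%N) a.

Definition weval (n : nat) (a : seq nat) : int -> int :=
  foldr (fun k f => fun x => sref n k (f x)) id a.

Definition represents (n : nat) (a : seq nat) (w : int -> int) : Prop :=
  word_ok n a /\ forall x, weval n a x = w x.

Definition length_is (n : nat) (w : int -> int) (l : nat) : Prop :=
  (exists a, represents n a w /\ size a = l) /\
  (forall a, represents n a w -> (l <= size a)%N).

Definition redword_of (n : nat) (a : seq nat) (w : int -> int) : Prop :=
  represents n a w /\ forall b, represents n b w -> (size a <= size b)%N.

Definition reduced (n : nat) (a : seq nat) : Prop := redword_of n a (weval n a).

Definition covers (n : nat) (v w : int -> int) : Prop :=
  (exists p q : int, ~~ cong n p q /\ forall x, w x = v (tref n p q x)) /\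
  exists l, length_is n v l /\ length_is n w l.+1.

Definition Psi_plus (n : nat) (v : int -> int) (r : int) (w : int -> int) : Prop :=
  covers n v w /\
  exists s : int, r < s /\ ~~ cong n r s /\ forall x, w x = v (tref n r s x).

Definition Psi_minus (n : nat) (v : int -> int) (r : int) (w : int -> int) : Prop :=
  covers n v w /\
  exists s : int, s < r /\ ~~ cong n s r /\ forall x, w x = v (tref n s r x).

Definition delete (a : seq nat) (i : nat) : seq nat := take i a ++ drop i.+1 a.

(* v-marked words (a, i), with 0-based index i < size a *)
Definition marked (n : nat) (v : int -> int) (m : seq nat * nat) : Prop :=
  word_ok n m.1 /\ (m.2 < size m.1)%N /\ redword_of n (delete m.1 m.2) v.

Definition decr (n : nat) (a : seq nat) (i : nat) : seq nat :=
  set_nth 0%N a i ((nth 0%N a i + n - 1) %% n)%N.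

Definition little_edge (n : nat) (v : int -> int) (m m' : seq nat * nat) : Prop :=
  marked n v m /\ m'.1 = decr n m.1 m.2 /\
  ((reduced n m'.1 /\ m'.2 = m.2) \/
   (~ reduced n m'.1 /\ m'.2 <> m.2 /\ (m'.2 < size m'.1)%N /\
    redword_of n (delete m'.1 m'.2) v)).

(* phi^v(m) = m' : m' is the first reduced v-marked word strictly after m along the
   (directed) path of the Little graph starting at m *)
Definition phi_rel (n : nat) (v : int -> int) (m m' : seq nat * nat) : Prop :=
  exists (k : nat) (f : nat -> seq nat * nat),
    (0 < k)%N /\ f 0%N = m /\ f k = m' /\
    (forall j, (j < k)%N -> little_edge n v (f j) (f j.+1)) /\
    (forall j, (0 < j)%N -> (j < k)%N -> ~ reduced n (f j).1) /\
    reduced n m'.1.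

Definition RPsi_plus (n : nat) (v : int -> int) (r : int) (m : seq nat * nat) : Prop :=
  reduced n m.1 /\ Psi_plus n v r (weval n m.1) /\ marked n v m.

Definition RPsi_minus (n : nat) (v : int -> int) (r : int) (m : seq nat * nat) : Prop :=
  reduced n m.1 /\ Psi_minus n v r (weval n m.1) /\ marked n v m.

(* Main.v *)
Require Import Defs.
From mathcomp Require Import all_boot all_order all_algebra.
From mathcomp Require Import zify.
From Stdlib Require Import Classical ClassicalEpsilon.
Set Implicit Arguments. Unset Strict Implicit. Unset Printing Implicit Defensive.
Import Order.TTheory GRing.Theory Num.Theory.
Local Open Scope ring_scope.

Ltac szl := rewrite ?size_cat /= ?size_cat /= ?size_cat /= ?size_cat /=; lia.

Section Aff.
Variable n : nat.
Hypothesis n2 : (1 < n)%N.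

Lemma congE (x y : int) : cong n x y <-> exists k : int, x = y + k * n%:Z.
Proof.
rewrite /cong eqz_mod_dvd; split.
  by move=> /dvdzP [q Hq]; exists q; rewrite -Hq addrC subrK.
by move=> [k ->]; apply/dvdzP; exists k; rewrite addrC addKr.
Qed.

Lemma cong_refl x : cong n x x.
Proof. by rewrite /cong. Qed.
Lemma cong_sym x y : cong n x y -> cong n y x.
Proof. by rewrite /cong eq_sym. Qed.
Lemma cong_trans x y z : cong n x y -> cong n y z -> cong n x z.
Proof. by rewrite /cong => /eqP -> . Qed.
Lemma cong_shift x y k : cong n (x + k * n%:Z) y = cong n x y.
Proof.
apply/idP/idP => H.
  apply/congE; move/congE: H => [j Hj]; exists (j - k); lia.
apply/congE; move/congE: H => [j Hj]; exists (j + k); lia.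
Qed.
Lemma cong_add1 x y : cong n (x + 1) (y + 1) = cong n x y.
Proof.
apply/idP/idP => /congE [k Hk]; apply/congE; exists k; lia.
Qed.
Lemma cong_addn x y : cong n (x + n%:Z) y = cong n x y.
Proof. by have := cong_shift x y 1; rewrite mul1r. Qed.
Lemma ncong_succ x : ~~ cong n x (x + 1).
Proof.
apply/negP => /congE [k Hk].
have : k * n%:Z = -1 by lia.
case: k {Hk} => [k|k]; lia.
Qed.


Lemma sref_per c x : sref n c (x + n%:Z) = sref n c x + n%:Z.
Proof.
rewrite /sref !cong_addn.
by case: ifP => _; [|case: ifP => _]; lia.
Qed.

Lemma cong_c_c1 (c : int) x : cong n x c -> ~~ cong n x (c + 1).
Proof.
move=> H; apply/negP => H2; have := ncong_succ c; rewrite (cong_trans (cong_sym H) H2) //.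
Qed.

Lemma sref1 c x : cong n x c%:Z -> sref n c x = x + 1.
Proof. by rewrite /sref => ->. Qed.
Lemma sref2 c x : ~~ cong n x c%:Z -> cong n x (c%:Z + 1) -> sref n c x = x - 1.
Proof. by rewrite /sref (_ : (c.+1)%:Z = c%:Z + 1); [move=> /negbTE -> -> | lia]. Qed.
Lemma sref3 c x : ~~ cong n x c%:Z -> ~~ cong n x (c%:Z + 1) -> sref n c x = x.
Proof. by rewrite /sref (_ : (c.+1)%:Z = c%:Z + 1); [move=> /negbTE -> /negbTE -> | lia]. Qed.

Lemma sref_inv c x : sref n c (sref n c x) = x.
Proof.
case: (boolP (cong n x c%:Z)) => H1.
  have H3 : ~~ cong n (x + 1) c%:Z.
    apply/negP => H; have := ncong_succ x; by rewrite (cong_trans H1 (cong_sym H)).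
  rewrite (sref1 H1) (sref2 H3); [lia | by rewrite cong_add1].
case: (boolP (cong n x (c%:Z + 1))) => H2.
  rewrite (sref2 H1 H2) sref1; first lia.
  by rewrite -cong_add1 (_ : x - 1 + 1 = x) //; lia.
by rewrite !sref3.
Qed.

Lemma tref1 p q x : cong n x p -> tref n p q x = x + (q - p).
Proof. by rewrite /tref => ->. Qed.
Lemma tref2 p q x : ~~ cong n x p -> cong n x q -> tref n p q x = x - (q - p).
Proof. by rewrite /tref => /negbTE -> ->. Qed.
Lemma tref3 p q x : ~~ cong n x p -> ~~ cong n x q -> tref n p q x = x.
Proof. by rewrite /tref => /negbTE -> /negbTE ->. Qed.

Lemma cong_r x y z : cong n y z -> cong n x y = cong n x z.
Proof.
move=> H; apply/idP/idP => H'; [exact: cong_trans H' H | exact: cong_trans H' (cong_sym H)].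
Qed.

Lemma sref_tref c p x : cong n p c%:Z -> sref n c x = tref n p (p + 1) x.
Proof.
move=> Hp.
have E1 : cong n x c%:Z = cong n x p by apply: cong_r; apply: cong_sym.
have E2 : cong n x (c%:Z + 1) = cong n x (p + 1).
  by apply: cong_r; rewrite cong_add1; apply: cong_sym.
case: (boolP (cong n x p)) => H1.
  by rewrite tref1 // sref1 ?E1 //; lia.
case: (boolP (cong n x (p + 1))) => H2.
  by rewrite tref2 // sref2 ?E1 ?E2 //; lia.
by rewrite tref3 // sref3 ?E1 ?E2.
Qed.

Lemma sref_order c a b : a < b -> sref n c b < sref n c a ->
  cong n a c%:Z /\ b = a + 1.
Proof.
move=> ab.
have Hs : forall x, sref n c x = x + 1 \/ sref n c x = x - 1 \/ sref n c x = x.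
  move=> x; case: (boolP (cong n x c%:Z)) => H1; first by left; rewrite sref1.
  case: (boolP (cong n x (c%:Z + 1))) => H2; first by right; left; rewrite sref2.
  by right; right; rewrite sref3.
case: (boolP (cong n a c%:Z)) => Ha.
  rewrite (sref1 Ha) => H; split => //.
  case: (Hs b) => [|[]] E; rewrite E in H; lia.
case: (boolP (cong n a (c%:Z + 1))) => Ha2.
  rewrite (sref2 Ha Ha2) => H; case: (Hs b) => [|[]] E; rewrite E in H; lia.
rewrite (sref3 Ha Ha2) => H.
case: (boolP (cong n b c%:Z)) => Hb; first by rewrite (sref1 Hb) in H; lia.
case: (boolP (cong n b (c%:Z + 1))) => Hb2; last by rewrite (sref3 Hb Hb2) in H; lia.
rewrite (sref2 Hb Hb2) in H.
have Eb : b = a + 1 by lia.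
by move: Hb2; rewrite Eb cong_add1 (negbTE Ha).
Qed.

Lemma perk (f : int -> int) : (forall x, f (x + n%:Z) = f x + n%:Z) ->
  forall k x, f (x + k * n%:Z) = f x + k * n%:Z.
Proof.
move=> Hf.
have Hm : forall m : nat, forall x, f (x + m%:Z * n%:Z) = f x + m%:Z * n%:Z.
  elim=> [|m IH] x; first by rewrite !mul0r !addr0.
  have -> : x + (m.+1)%:Z * n%:Z = (x + m%:Z * n%:Z) + n%:Z by lia.
  rewrite Hf IH; lia.
case=> [m|m] x; first exact: Hm.
have := Hm m.+1 (x + Negz m * n%:Z).
have -> : x + Negz m * n%:Z + (m.+1)%:Z * n%:Z = x by rewrite NegzE; lia.
move=> H; rewrite NegzE in H *; lia.
Qed.

Lemma weval_cat a b x : weval n (a ++ b) x = weval n a (weval n b x).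
Proof. by elim: a => [|c a IH] //=; rewrite IH. Qed.

Lemma weval_cons c a x : weval n (c :: a) x = sref n c (weval n a x).
Proof. by []. Qed.

Lemma weval_per a x : weval n a (x + n%:Z) = weval n a x + n%:Z.
Proof. by elim: a => [|c a IH] //=; rewrite IH sref_per. Qed.

Lemma weval_perk a k x : weval n a (x + k * n%:Z) = weval n a x + k * n%:Z.
Proof. by apply: perk; apply: weval_per. Qed.

Lemma weval_revK a x : weval n a (weval n (rev a) x) = x.
Proof.
elim: a x => [|c a IH] x //=.
by rewrite rev_cons -cats1 weval_cat /= IH sref_inv.
Qed.

Lemma weval_Krev a x : weval n (rev a) (weval n a x) = x.
Proof.
elim: a x => [|c a IH] x //=.
by rewrite rev_cons -cats1 weval_cat /= sref_inv IH.
Qed.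

Lemma weval_inj a : injective (weval n a).
Proof. by move=> x y H; rewrite -(weval_Krev a x) H weval_Krev. Qed.

Lemma weval_cong a x y : cong n (weval n a x) (weval n a y) = cong n x y.
Proof.
apply/idP/idP => /congE [k Hk]; apply/congE; exists k.
  by apply: (@weval_inj a); rewrite weval_perk.
by rewrite Hk weval_perk.
Qed.

Lemma weval_conj d p q x :
  weval n d (tref n p q x) = tref n (weval n d p) (weval n d q) (weval n d x).
Proof.
case: (boolP (cong n x p)) => H1.
  rewrite tref1 // tref1 ?weval_cong //.
  move/congE: H1 => [k ->].
  have -> : p + k * n%:Z + (q - p) = q + k * n%:Z by lia.
  rewrite !weval_perk; lia.
case: (boolP (cong n x q)) => H2.
  rewrite tref2 // tref2 ?weval_cong //.
  move/congE: H2 => [k ->].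
  have -> : q + k * n%:Z - (q - p) = p + k * n%:Z by lia.
  rewrite !weval_perk; lia.
by rewrite tref3 // tref3 ?weval_cong.
Qed.

Lemma tref_sym p q x : ~~ cong n p q -> tref n p q x = tref n q p x.
Proof.
move=> Hpq.
case: (boolP (cong n x p)) => H1.
  have H2 : ~~ cong n x q by apply/negP => H; move: Hpq; rewrite (cong_trans (cong_sym H1) H).
  rewrite tref1 // tref2 //; lia.
case: (boolP (cong n x q)) => H2.
  rewrite tref2 // tref1 //; lia.
by rewrite !tref3.
Qed.

Lemma tref_shift p q p' q' x : cong n p p' -> q' - p' = q - p ->
  tref n p q x = tref n p' q' x.
Proof.
move=> Hp Hd.
have Hq : cong n q q'.
  move/congE: Hp => [k Hk]; apply/congE; exists k; lia.
have E1 := cong_r x Hp; have E2 := cong_r x Hq.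
rewrite /tref E1 E2 Hd //.
Qed.

Lemma tref_inv p q x : ~~ cong n p q -> tref n p q (tref n p q x) = x.
Proof.
move=> Hpq.
case: (boolP (cong n x p)) => H1.
  have H3 : cong n (x + (q - p)) q.
    move/congE: H1 => [k Hk]; apply/congE; exists k; lia.
  have H4 : ~~ cong n (x + (q - p)) p.
    apply/negP => H; move: Hpq; by rewrite (cong_trans (cong_sym H) H3).
  rewrite (tref1 _ H1) (tref2 H4 H3); lia.
case: (boolP (cong n x q)) => H2.
  have H3 : cong n (x - (q - p)) p.
    move/congE: H2 => [k Hk]; apply/congE; exists k; lia.
  rewrite (tref2 H1 H2) (tref1 _ H3); lia.
by rewrite (tref3 H1 H2) (tref3 H1 H2).
Qed.

Lemma tref_p p q : tref n p q p = q.
Proof. by rewrite tref1 ?cong_refl //; lia. Qed.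
Lemma tref_q p q : ~~ cong n p q -> tref n p q q = p.
Proof.
move=> H; rewrite tref2 ?cong_refl //; last by apply/negP => /cong_sym; apply/negP.
lia.
Qed.

Lemma word_ok_cat a b : word_ok n (a ++ b) = word_ok n a && word_ok n b.
Proof. by rewrite /word_ok all_cat. Qed.

Lemma word_ok_del a1 x a2 : word_ok n (a1 ++ x :: a2) -> word_ok n (a1 ++ a2).
Proof. by rewrite !word_ok_cat /= => /andP [-> /andP [_ ->]]. Qed.

Lemma exch a al be : al < be -> ~~ cong n al be -> weval n a be < weval n a al ->
  exists a1 x a2, a = a1 ++ x :: a2 /\
    forall y, weval n (a1 ++ a2) y = weval n a (tref n al be y).
Proof.
move=> ab nab; elim: a => [|c a IH] /=; first lia.
move=> H.
case: (ltrgtP (weval n a be) (weval n a al)) => H'.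
- have [a1 [x [a2 [-> Ha]]]] := IH H'.
  by exists (c :: a1), x, a2; split => // y /=; rewrite Ha.
- have [Hc E] := sref_order H' H.
  exists [::], c, a; split => // y /=.
  rewrite weval_conj E -(sref_tref _ Hc) sref_inv //.
- by move/(@weval_inj a): H'; lia.
Qed.

Lemma size_lt_red u v b : redword_of n u v -> represents n b v -> (size b < size u)%N -> False.
Proof. by move=> [_ H] /H; lia. Qed.

Lemma G1 u v a al be : redword_of n u v -> word_ok n a ->
  (forall y, weval n a y = v (tref n al be y)) -> al < be -> ~~ cong n al be ->
  v al < v be -> size a = (size u).+1 -> reduced n a.
Proof.
move=> Hu Ha Hw ab nab vab sz; split; first by split.
move=> b [Hb Hbw]; rewrite leqNgt; apply/negP => lt.
have H1 : weval n b be < weval n b al.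
  by rewrite !Hbw !Hw tref_p tref_q.
have [b1 [x [b2 [Eb Hb12]]]] := exch ab nab H1.
apply: (size_lt_red Hu (b := b1 ++ b2)).
  split; first by rewrite Eb in Hb; apply: word_ok_del Hb.
  by move=> y; rewrite Hb12 Hbw Hw tref_inv.
move: lt; rewrite sz Eb !size_cat /=; lia.
Qed.

Lemma G2 u v a al be : redword_of n u v ->
  (forall y, weval n a y = v (tref n al be y)) -> al < be -> ~~ cong n al be ->
  v be < v al -> size a = (size u).+1 -> ~ reduced n a.
Proof.
move=> [[Hu Huv] _] Hw ab nab vab sz [_ Hred].
have H1 : weval n u be < weval n u al by rewrite !Huv.
have [u1 [x [u2 [Eu Hu12]]]] := exch ab nab H1.
have : (size a <= size (u1 ++ u2))%N.
  apply: Hred; split; first by rewrite Eu in Hu; apply: word_ok_del Hu.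
  by move=> y; rewrite Hu12 Huv Hw.
rewrite sz Eu !size_cat /=; lia.
Qed.

Lemma DESC p e c q w : redword_of n (p ++ e ++ c :: q) w ->
  weval n e c%:Z < weval n e (c%:Z + 1).
Proof.
move=> Hr.
have nc : ~~ cong n c%:Z (c%:Z + 1) by apply: ncong_succ.
case: (ltrgtP (weval n e c%:Z) (weval n e (c%:Z + 1))) => // H.
- have lt1 : c%:Z < c%:Z + 1 by lia.
  have [e1 [x [e2 [Ee He]]]] := exch lt1 nc H.
  exfalso; apply: (size_lt_red Hr (b := p ++ (e1 ++ e2) ++ q)).
    case: Hr => [[Hok Hw] _]; split.
      move: Hok; rewrite Ee !word_ok_cat /= => /and3P [-> /and3P [-> _ ->] /andP [_ ->]].
      by [].
    move=> y; rewrite -Hw !(weval_cat p) (weval_cat (e1 ++ e2)) He (weval_cat e) /=.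
    by rewrite -(sref_tref _ (cong_refl _)).
  by rewrite Ee !size_cat /=; lia.
- by move/(@weval_inj e): H => /eqP; rewrite eq_sym; move/eqP; lia.
Qed.

Lemma cong_sym_eq x y : cong n x y = cong n y x.
Proof. by rewrite /cong eq_sym. Qed.

Lemma sref_perk c k x : sref n c (x + k * n%:Z) = sref n c x + k * n%:Z.
Proof. by apply: perk => y; apply: sref_per. Qed.

Lemma sref_c c : sref n c c%:Z = c%:Z + 1.
Proof. by rewrite sref1 ?cong_refl. Qed.

Lemma sref_c1 c : sref n c (c%:Z + 1) = c%:Z.
Proof.
rewrite sref2 ?cong_refl //; first lia.
by rewrite cong_sym_eq ncong_succ.
Qed.

Definition Lw d (c : nat) := weval n (rev d) c%:Z.
Definition Uw d (c : nat) := weval n (rev d) (c%:Z + 1).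

Lemma Lw_val d c : weval n d (Lw d c) = c%:Z.
Proof. exact: weval_revK. Qed.
Lemma Uw_val d c : weval n d (Uw d c) = c%:Z + 1.
Proof. exact: weval_revK. Qed.

Lemma LU_ncong d c : ~~ cong n (Lw d c) (Uw d c).
Proof. by rewrite -(weval_cong d) Lw_val Uw_val ncong_succ. Qed.

Lemma elem_form b c d y :
  weval n (b ++ c :: d) y = weval n (b ++ d) (tref n (Lw d c) (Uw d c) y).
Proof.
rewrite !weval_cat /= weval_conj Lw_val Uw_val -(sref_tref _ (cong_refl _)) //.
Qed.

Lemma weval_cancel_l b (X Y : int -> int) : (forall y, weval n b (X y) = weval n b (Y y)) ->
  forall y, X y = Y y.
Proof. by move=> H y; apply: (@weval_inj b). Qed.

Lemma weval_cancel_r d (X Y : int -> int) : (forall y, X (weval n d y) = Y (weval n d y)) ->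
  forall z, X z = Y z.
Proof. by move=> H z; rewrite -(weval_revK d z) H. Qed.

Lemma sref_gt c y : y < sref n c y -> exists k, y = c%:Z + k * n%:Z.
Proof.
case: (boolP (cong n y c%:Z)) => H1; first by move/congE: H1.
case: (boolP (cong n y (c%:Z + 1))) => H2.
  by rewrite sref2 //; lia.
by rewrite sref3 //; lia.
Qed.

Lemma K0 b c e c' d v : redword_of n (b ++ e ++ c' :: d) v ->
  represents n (b ++ c :: e ++ d) v ->
  cong n (Uw (e ++ c' :: d) c) (Lw d c') /\ cong n (Lw (e ++ c' :: d) c) (Uw d c').
Proof.
move=> Hr [_ H2]; have [[_ H1] _] := Hr.
have H : forall z, weval n e (sref n c' z) = sref n c (weval n e z).
  apply: (@weval_cancel_r d (fun z => weval n e (sref n c' z)) (fun z => sref n c (weval n e z))) => y.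
  apply: (@weval_cancel_l b (fun y => weval n e (sref n c' (weval n d y))) (fun y => sref n c (weval n e (weval n d y)))) => {}y.
  by have := H1 y; rewrite -H2 !weval_cat /= weval_cat.
have Hd : weval n e c'%:Z < weval n e (c'%:Z + 1).
  exact: DESC Hr.
have Hc' := H c'%:Z; rewrite sref_c in Hc'.
have [k Hk] : exists k, weval n e c'%:Z = c%:Z + k * n%:Z.
  by apply: sref_gt; rewrite -Hc'.
have He1 : weval n e (c'%:Z + 1) = c%:Z + 1 + k * n%:Z.
  by rewrite Hc' Hk sref_perk sref_c.
have Lv := Lw_val (e ++ c' :: d) c; have Uv := Uw_val (e ++ c' :: d) c.
rewrite weval_cat /= in Lv; rewrite weval_cat /= in Uv.
split.
- have E : weval n e (c'%:Z + 1 + (- k) * n%:Z) = c%:Z + 1.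
    rewrite weval_perk He1; lia.
  rewrite -E in Uv; move/(@weval_inj e): Uv => Uv.
  have : weval n d (Uw (e ++ c' :: d) c) = c'%:Z + (- k) * n%:Z.
    by rewrite -[LHS](sref_inv c') Uv sref_perk sref_c1.
  rewrite -[c'%:Z](Lw_val d) -weval_perk => /(@weval_inj d) ->.
  by rewrite cong_shift cong_refl.
- have E : weval n e (c'%:Z + (- k) * n%:Z) = c%:Z.
    rewrite weval_perk Hk; lia.
  rewrite -E in Lv; move/(@weval_inj e): Lv => Lv.
  have : weval n d (Lw (e ++ c' :: d) c) = c'%:Z + 1 + (- k) * n%:Z.
    by rewrite -[LHS](sref_inv c') Lv sref_perk sref_c.
  rewrite -[c'%:Z + 1](Uw_val d) -weval_perk => /(@weval_inj d) ->.
  by rewrite cong_shift cong_refl.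
Qed.

Lemma split_at (a : seq nat) i : (i < size a)%N -> exists b c d, a = b ++ c :: d /\ size b = i.
Proof.
move=> Hi; exists (take i a), (nth 0%N a i), (drop i.+1 a); split.
  by rewrite -drop_nth // cat_take_drop.
by rewrite size_take Hi.
Qed.

Lemma split2 (a : seq nat) i j : (i < j)%N -> (j < size a)%N ->
  exists b c e c' d, a = b ++ c :: e ++ c' :: d /\ size b = i /\ size (b ++ c :: e) = j.
Proof.
move=> ij /split_at [B [c' [d [-> sB]]]].
have : (i < size B)%N by rewrite sB.
move=> /split_at [b [c [e [EB sb]]]].
exists b, c, e, c', d; split; first by rewrite EB -catA.
by rewrite -EB.
Qed.

Lemma del_form (b : seq nat) c d : delete (b ++ c :: d) (size b) = b ++ d.
Proof. by rewrite /delete take_size_cat // -cat_rcons drop_size_cat // size_rcons. Qed.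

Lemma drop_form (b : seq nat) c d : drop (size b).+1 (b ++ c :: d) = d.
Proof. by rewrite -cat_rcons drop_size_cat // size_rcons. Qed.

Lemma nth_form (b : seq nat) c d : nth 0%N (b ++ c :: d) (size b) = c.
Proof. by rewrite nth_cat ltnn subnn. Qed.

Lemma decr_form (b : seq nat) c d :
  decr n (b ++ c :: d) (size b) = b ++ ((c + n - 1) %% n)%N :: d.
Proof.
rewrite /decr nth_form.
elim: b => [|x b IH] //=.
by rewrite IH.
Qed.

Lemma size_decr a i : (i < size a)%N -> size (decr n a i) = size a.
Proof. by move=> Hi; rewrite /decr size_set_nth; apply/maxn_idPr. Qed.

Definition mL (a : seq nat) i := Lw (drop i.+1 a) (nth 0%N a i).
Definition mU (a : seq nat) i := Uw (drop i.+1 a) (nth 0%N a i).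

Lemma mL_form (b : seq nat) c d : mL (b ++ c :: d) (size b) = Lw d c.
Proof. by rewrite /mL drop_form nth_form. Qed.
Lemma mU_form (b : seq nat) c d : mU (b ++ c :: d) (size b) = Uw d c.
Proof. by rewrite /mU drop_form nth_form. Qed.

Lemma K a i j v : i <> j -> (i < size a)%N -> (j < size a)%N ->
  redword_of n (delete a i) v -> redword_of n (delete a j) v ->
  cong n (mU a i) (mL a j).
Proof.
move=> nij Hi Hj Ri Rj.
case: (ltngtP i j) => [ij|ji|eij]; last by [].
- have [b [c [e [c' [d [Ea [sb sj]]]]]]] := split2 ij Hj.
  move: Ri Rj; rewrite Ea -sb.
  rewrite (del_form b c (e ++ c' :: d)) mU_form.
  have -> : b ++ c :: e ++ c' :: d = (b ++ c :: e) ++ c' :: d by rewrite -catA.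
  rewrite -sj del_form mL_form -catA /= => Ri [Rj _].
  by case: (K0 Ri Rj).
- have [b [c [e [c' [d [Ea [sb sj]]]]]]] := split2 ji Hi.
  move: Ri Rj; rewrite Ea -sb.
  rewrite (del_form b c (e ++ c' :: d)) mL_form.
  have -> : b ++ c :: e ++ c' :: d = (b ++ c :: e) ++ c' :: d by rewrite -catA.
  rewrite -sj del_form mU_form -catA /= => [[Ri _]] Rj.
  by case: (K0 Rj Ri) => _; rewrite cong_sym_eq.
Qed.

Lemma elem_m a i y : (i < size a)%N ->
  weval n a y = weval n (delete a i) (tref n (mL a i) (mU a i) y).
Proof.
move=> /split_at [b [c [d [-> <-]]]].
by rewrite del_form mL_form mU_form elem_form.
Qed.

Lemma LU_ncong_m a i : ~~ cong n (mL a i) (mU a i).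
Proof. exact: LU_ncong. Qed.

Lemma three a i j k v : i <> j -> j <> k -> i <> k ->
  (i < size a)%N -> (j < size a)%N -> (k < size a)%N ->
  redword_of n (delete a i) v -> redword_of n (delete a j) v -> redword_of n (delete a k) v ->
  False.
Proof.
move=> ij jk ik Hi Hj Hk Ri Rj Rk.
have H1 := K (nesym ij) Hj Hi Rj Ri.
have H2 := K jk Hj Hk Rj Rk.
have H3 := K ik Hi Hk Ri Rk.
have := LU_ncong_m a i.
by rewrite (cong_trans (cong_trans (cong_sym H1) H2) (cong_sym H3)).
Qed.

Lemma red_inj u v : redword_of n u v -> injective v.
Proof.
move=> [[_ H] _] x y; rewrite -!H; exact: (@weval_inj u).
Qed.

Lemma size_delete_lt (a : seq nat) i : (i < size a)%N -> size a = (size (delete a i)).+1.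
Proof.
move=> /split_at [b [c [d [-> <-]]]]; rewrite del_form !size_cat /=; lia.
Qed.

Lemma word_ok_delete a i : word_ok n a -> word_ok n (delete a i).
Proof.
rewrite /delete /word_ok all_cat => /allP H.
by apply/andP; split; apply/allP => x Hx; apply: H; [apply: mem_take Hx | apply: mem_drop Hx].
Qed.

Lemma orient a i v : reduced n a -> (i < size a)%N -> redword_of n (delete a i) v ->
  mL a i < mU a i /\ v (mL a i) < v (mU a i).
Proof.
move=> Hred Hi Rv.
have [b [c [d [Ea sb]]]] := split_at Hi.
have Hv := Rv; case: Hv => [[_ Hv] _].
have vLU : v (mL a i) < v (mU a i).
  rewrite -!Hv Ea -sb del_form mL_form mU_form !weval_cat Lw_val Uw_val.
  apply: (DESC (p := [::]) (q := d) (w := weval n a)).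
  by rewrite /= -Ea.
split => //.
have nc := LU_ncong_m a i.
case: (ltrgtP (mL a i) (mU a i)) => // H.
- exfalso; apply: (G2 (u := delete a i) (v := v) (a := a) (al := mU a i) (be := mL a i)) => //.
  + by move=> y; rewrite (elem_m y Hi) Hv tref_sym.
  + by rewrite cong_sym_eq.
  + exact: size_delete_lt Hi.
- by move: nc; rewrite H cong_refl.
Qed.

Lemma cat_split (b d u1 u2 : seq nat) x : b ++ d = u1 ++ x :: u2 ->
  (exists b1 b2, b = b1 ++ x :: b2 /\ u1 = b1 /\ u2 = b2 ++ d) \/
  (exists d1 d2, d = d1 ++ x :: d2 /\ u1 = b ++ d1 /\ u2 = d2).
Proof.
elim: b u1 => [|y b IH] u1 /=.
  by move=> ->; right; exists u1, u2.
case: u1 => [|z u1] /=.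
  by case=> -> <-; left; exists [::], b.
case=> -> /IH [[b1 [b2 [-> [-> ->]]]]|[d1 [d2 [-> [-> ->]]]]].
  by left; exists (z :: b1), b2.
by right; exists d1, d2.
Qed.

Lemma redword_same u u' v : redword_of n u v -> represents n u' v -> size u' = size u ->
  redword_of n u' v.
Proof. by move=> [_ H] Hr Hs; split => // b /H; rewrite Hs. Qed.

Lemma exist_j a i v : word_ok n a -> (i < size a)%N -> redword_of n (delete a i) v ->
  ~ reduced n a ->
  exists j, j <> i /\ (j < size a)%N /\ redword_of n (delete a j) v.
Proof.
move=> Hok Hi Rv Hnr.
have [b [c [d [Ea sb]]]] := split_at Hi.
move: Hok Rv Hnr; rewrite Ea -sb del_form => Hok Rv Hnr.
have Hv := Rv; case: Hv => [[_ Hv] _].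
have vinj := red_inj Rv.
set L := Lw d c; set U := Uw d c.
have nc : ~~ cong n L U := LU_ncong d c.
have Hw : forall y, weval n (b ++ c :: d) y = v (tref n L U y).
  by move=> y; rewrite elem_form Hv.
have [al [be [ab [nab [vab Hw']]]]] : exists al be, al < be /\ ~~ cong n al be /\
    v be < v al /\ forall y, weval n (b ++ c :: d) y = v (tref n al be y).
  case: (ltrgtP L U) => H.
  - exists L, U; split => //; split => //; split => //.
    case: (ltrgtP (v L) (v U)) => // H2.
    + exfalso; apply: Hnr; apply: (G1 Rv Hok Hw H nc H2).
      szl.
    + by move/vinj: H2 => E; move: nc; rewrite E cong_refl.
  - exists U, L; split => //; split; first by rewrite cong_sym_eq.
    split; last by move=> y; rewrite Hw tref_sym.
    case: (ltrgtP (v U) (v L)) => // H2.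
    + exfalso; apply: Hnr; apply: (G1 (al := U) (be := L) Rv Hok _ H _ H2).
      * by move=> y; rewrite Hw tref_sym.
      * by rewrite cong_sym_eq.
      * szl.
    + by move/vinj: H2 => E; move: nc; rewrite E cong_refl.
  - by move: nc; rewrite H cong_refl.
have H1 : weval n (b ++ d) be < weval n (b ++ d) al by rewrite !Hv.
have [u1 [x [u2 [Eu Hu]]]] := exch ab nab H1.
have Hu' : forall y, weval n (u1 ++ u2) y = weval n (b ++ c :: d) y.
  by move=> y; rewrite Hu Hv Hw'.
case: (cat_split Eu) => [[b1 [b2 [Eb [E1 E2]]]]|[d1 [d2 [Ed [E1 E2]]]]].
- exists (size b1); split.
    by rewrite Eb; szl.
  split; first by rewrite Eb; szl.
  rewrite Eb -catA /= del_form.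
  apply: (redword_same Rv).
    split.
      move: Hok; rewrite Eb -catA /= => Hok.
      by apply: word_ok_del Hok.
    move=> y; rewrite -Hv Eb -catA /=.
    have Hc : forall z, weval n b2 (sref n c z) = sref n x (weval n b2 z).
      apply: (@weval_cancel_r d (fun z => weval n b2 (sref n c z)) (fun z => sref n x (weval n b2 z))) => z.
      apply: (@weval_cancel_l b1 (fun z => weval n b2 (sref n c (weval n d z))) (fun z => sref n x (weval n b2 (weval n d z)))) => {}z.
      have := Hu' z; rewrite E1 E2 Eb -catA /= !weval_cat /= weval_cat => /(@weval_inj b1) ->.
      by rewrite sref_inv.
    by rewrite !weval_cat /= weval_cat /= Hc.
  by rewrite Eb; szl.
- exists (size (b ++ c :: d1)); split.
    by szl.
  split; first by rewrite Ed; szl.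
  have -> : b ++ c :: d = (b ++ c :: d1) ++ x :: d2 by rewrite Ed -catA.
  rewrite del_form.
  apply: (redword_same Rv).
    split.
      apply: (@word_ok_del _ x); move: Hok; rewrite Ed -catA //.
    move=> y; rewrite -Hv Ed.
    have Hc : forall z, sref n c (weval n d1 z) = weval n d1 (sref n x z).
      apply: (@weval_cancel_r d2 (fun z => sref n c (weval n d1 z)) (fun z => weval n d1 (sref n x z))) => z.
      apply: (@weval_cancel_l b (fun z => sref n c (weval n d1 (weval n d2 z))) (fun z => weval n d1 (sref n x (weval n d2 z)))) => {}z.
      have := Hu' z; rewrite E1 E2 Ed !weval_cat /= weval_cat => /(@weval_inj b) ->.
      by rewrite sref_inv.
    by rewrite -catA /= !weval_cat /= !weval_cat /= Hc.
  by rewrite Ed; szl.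
Qed.

Lemma word_ok_cons c d : word_ok n (c :: d) = (c < n)%N && word_ok n d.
Proof. by []. Qed.

Lemma decr_val c : (c < n)%N -> ((c + n - 1) %% n = if c is 0 then n - 1 else c - 1)%N.
Proof.
case: c => [|c] Hc.
  by rewrite add0n modn_small //; lia.
have -> : (c.+1 + n - 1 = c + n)%N by lia.
by rewrite modnDr modn_small //; lia.
Qed.

Lemma decr_cong d c : (c < n)%N ->
  cong n (Uw d ((c + n - 1) %% n)%N) (Lw d c).
Proof.
move=> Hc; rewrite /Uw /Lw decr_val //.
case: c Hc => [|c] Hc.
  have -> : ((n - 1)%N%:Z + 1 = 0%:Z + 1 * n%:Z) by lia.
  by rewrite weval_perk cong_shift cong_refl.
have -> : ((c.+1 - 1)%N%:Z + 1 = c.+1%:Z) by lia.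
exact: cong_refl.
Qed.

Lemma decr_props a i : word_ok n a -> (i < size a)%N ->
  [/\ delete (decr n a i) i = delete a i, word_ok n (decr n a i),
      size (decr n a i) = size a & cong n (mU (decr n a i) i) (mL a i)].
Proof.
move=> Hok Hi; have [b [c [d [Ea sb]]]] := split_at Hi.
move: Hok; rewrite Ea -sb decr_form !del_form mU_form mL_form => Hok.
have Hc : (c < n)%N by move: Hok; rewrite word_ok_cat word_ok_cons => /and3P [].
split => //.
- move: Hok; rewrite !word_ok_cat !word_ok_cons => /and3P [-> _ ->]; rewrite ltn_mod andbT; lia.
- szl.
- exact: decr_cong.
Qed.

Lemma decr_inj a a' i : word_ok n a -> word_ok n a' -> (i < size a)%N -> (i < size a')%N ->
  decr n a i = decr n a' i -> a = a'.
Proof.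
move=> Hok Hok' Hi Hi'.
have [b [c [d [Ea sb]]]] := split_at Hi.
have [b' [c' [d' [Ea' sb']]]] := split_at Hi'.
move: Hok Hok'; rewrite Ea Ea' => Hok Hok'.
have Hc : (c < n)%N by move: Hok; rewrite word_ok_cat word_ok_cons => /and3P [].
have Hc' : (c' < n)%N by move: Hok'; rewrite word_ok_cat word_ok_cons => /and3P [].
rewrite -{1}sb -sb' !decr_form => /eqP; rewrite eqseq_cat; last by rewrite sb sb'.
case/andP => /eqP -> /=; rewrite eqseq_cons => /andP [/eqP E /eqP ->].
rewrite !decr_val // in E.
suff -> : c = c' by [].
by move: E; case: c Hc {Ea Hok} => [|c] Hc; case: c' Hc' {Ea' Hok'} => [|c'] Hc' //=; lia.
Qed.

Lemma edge_marked v m m' : little_edge n v m m' -> marked n v m'.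
Proof.
case: m => a i; case: m' => a' j /=.
move=> [[Hok [Hi Rv]] [/= -> H]].
have [D1 Ok1 S1 _] := decr_props Hok Hi.
case: H => [[_ ->]|[_ [_ [Hj Rj]]]]; split => //; split => //.
- by rewrite S1.
- by rewrite D1.
Qed.

Lemma edge_size v m m' : little_edge n v m m' -> size m'.1 = size m.1.
Proof.
case: m => a i; case: m' => a' j /=.
move=> [[Hok [Hi Rv]] [/= -> H]].
by have [_ _ S1 _] := decr_props Hok Hi.
Qed.

Lemma succ_ex v m : marked n v m -> exists m', little_edge n v m m'.
Proof.
case: m => a i /= Hm; have := Hm; move=> [Hok [Hi Rv]] /=.
have [D1 Ok1 S1 _] := decr_props Hok Hi.
case: (Classical_Prop.classic (reduced n (decr n a i))) => Hr.
  by exists (decr n a i, i); split => //; split => //; left.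
have Rv' : redword_of n (delete (decr n a i) i) v by rewrite D1.
have Hi' : (i < size (decr n a i))%N by rewrite S1.
have [j [ji [Hj Rj]]] := exist_j Ok1 Hi' Rv' Hr.
by exists (decr n a i, j); split => //; split => //; right.
Qed.

Lemma succ_uniq v m m1 m2 : little_edge n v m m1 -> little_edge n v m m2 -> m1 = m2.
Proof.
case: m => a i; case: m1 => a1 j1; case: m2 => a2 j2 /=.
move=> [[Hok [Hi Rv]] [/= E1 H1]] [_ [/= E2 H2]].
subst a1 a2.
have [D1 Ok1 S1 _] := decr_props Hok Hi.
case: H1 => [[R1 ->]|[R1 [nn1 [Hj1 Rj1]]]]; case: H2 => [[R2 ->]|[R2 [nn2 [Hj2 Rj2]]]] //;
  try by exfalso; auto.
have Hi' : (i < size (decr n a i))%N by rewrite S1.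
case: (eqVneq j1 j2) => [-> //|nj].
exfalso; apply: (three (a := decr n a i) (i := i) (j := j1) (k := j2) (v := v)) => //.
- by move=> E; apply: nn1.
- by apply/eqP.
- by move=> E; apply: nn2.
- by rewrite D1.
Qed.

Lemma pred_uniq v m1 m2 m' : little_edge n v m1 m' -> little_edge n v m2 m' -> m1 = m2.
Proof.
case: m1 => a1 i1; case: m2 => a2 i2; case: m' => a j /=.
move=> [[Hok1 [Hi1 Rv1]] [/= E1 H1]] [[Hok2 [Hi2 Rv2]] [/= E2 H2]].
have [D1 Ok1 S1 _] := decr_props Hok1 Hi1.
have [D2 Ok2 S2 _] := decr_props Hok2 Hi2.
suff Ei : i1 = i2.
  subst i2; congr (_, _); apply: (decr_inj Hok1 Hok2 Hi1 Hi2); by rewrite -E1 -E2.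
case: H1 => [[R1 <-]|[R1 [nn1 [Hj1 Rj1]]]]; case: H2 => [[R2 <-]|[R2 [nn2 [Hj2 Rj2]]]] //;
  try by exfalso; auto.
case: (eqVneq i1 i2) => [-> //|ni].
exfalso; apply: (three (a := a) (i := i1) (j := i2) (k := j) (v := v)) => //.
- by apply/eqP.
- by move=> E; apply: nn2.
- by move=> E; apply: nn1.
- by rewrite E1 S1.
- by rewrite E2 S2.
- by rewrite E1 D1.
- by rewrite E2 D2.
Qed.

Lemma edge_cong v m m' : little_edge n v m m' ->
  (reduced n m'.1 -> cong n (mU m'.1 m'.2) (mL m.1 m.2)) /\
  (~ reduced n m'.1 -> cong n (mL m'.1 m'.2) (mL m.1 m.2)).
Proof.
case: m => a i; case: m' => a' j /=.
move=> [[Hok [Hi Rv]] [/= -> H]].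
have [D1 Ok1 S1 C1] := decr_props Hok Hi.
case: H => [[R ->]|[R [nj [Hj Rj]]]]; split => // R'.
have Hi' : (i < size (decr n a i))%N by rewrite S1.
have Ki := K (nesym nj) Hi' Hj (v := v).
rewrite D1 in Ki; have := Ki Rv Rj.
move=> H; exact: cong_trans (cong_sym H) C1.
Qed.

Fixpoint allw (l : nat) : seq (seq nat) :=
  if l is l'.+1 then [seq x :: w | x <- iota 0 n, w <- allw l'] else [:: [::]].

Lemma mem_allw a : word_ok n a -> a \in allw (size a).
Proof.
elim: a => [|x a IH] //; rewrite word_ok_cons => /andP [Hx Ha] /=.
apply: (allpairs_f (fun x w => x :: w)); last exact: IH.
by rewrite mem_iota add0n Hx.
Qed.

Definition cands l := [seq (a, i) | a <- allw l, i <- iota 0 l].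

Lemma mem_cands v m : marked n v m -> m \in cands (size m.1).
Proof.
case: m => a i [Hok [Hi _]] /=.
apply: (allpairs_f (fun a i => (a, i))); first exact: mem_allw.
by rewrite mem_iota add0n Hi.
Qed.

Definition sigma v m := epsilon (inhabits ([::], 0%N)) (fun m' => little_edge n v m m').

Lemma sigma_spec v m : marked n v m -> little_edge n v m (sigma v m).
Proof. by move=> Hm; apply: epsilon_spec; apply: succ_ex. Qed.

Lemma iter_marked v m j : marked n v m ->
  marked n v (iter j (sigma v) m) /\ size (iter j (sigma v) m).1 = size m.1.
Proof.
move=> Hm; elim: j => [|j [IH1 IH2]] //=.
have E := sigma_spec IH1.
by split; [apply: edge_marked E | rewrite (edge_size E)].
Qed.

Lemma iter_edge v m j : marked n v m ->
  little_edge n v (iter j (sigma v) m) (iter j.+1 (sigma v) m).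
Proof. by move=> Hm; apply: sigma_spec; case: (iter_marked j Hm). Qed.

Lemma orbit v m : marked n v m -> exists N, (0 < N)%N /\ iter N (sigma v) m = m.
Proof.
move=> Hm.
set M := size (cands (size m.1)).
set s := [seq iter j (sigma v) m | j <- iota 0 M.+1].
have Hnu : ~~ uniq s.
  apply/negP => U.
  have := uniq_leq_size U (s2 := cands (size m.1)).
  rewrite size_map size_iota ltnn.
  suff H : {subset s <= cands (size m.1)} by move/(_ H).
  move=> x /mapP [j _ ->].
  have [H1 H2] := iter_marked j Hm.
  by have := mem_cands H1; rewrite H2.
have [i [j [ij js E]]] := uniqPn (iter 0 (sigma v) m) Hnu.
rewrite size_map size_iota in js.
rewrite !(nth_map 0%N) ?size_iota // in E; last lia.
rewrite !nth_iota // in E; last lia.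
rewrite !add0n in E.
have back : forall p q, iter p.+1 (sigma v) m = iter q.+1 (sigma v) m ->
    iter p (sigma v) m = iter q (sigma v) m.
  move=> p q H; apply: (pred_uniq (v := v) (m' := iter p.+1 (sigma v) m)).
    exact: iter_edge.
  by rewrite H; apply: iter_edge.
exists (j - i)%N; split; first lia.
have : forall t, (t <= i)%N -> iter (i - t) (sigma v) m = iter (j - t) (sigma v) m.
  elim=> [|t IH] Ht; first by rewrite !subn0.
  apply: back; have -> : ((i - t.+1).+1 = i - t)%N by lia.
  have -> : ((j - t.+1).+1 = j - t)%N by lia.
  by apply: IH; lia.
by move/(_ i (leqnn _)); rewrite subnn /= => H; apply: esym.
Qed.

Lemma inv_phi v m m' : phi_rel n v m m' -> cong n (mU m'.1 m'.2) (mL m.1 m.2).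
Proof.
move=> [k [f [k0 [f0 [fk [Hed [Hnr Hred]]]]]]].
have C : forall j, (j < k)%N -> cong n (mL (f j).1 (f j).2) (mL m.1 m.2).
  elim=> [|j IH] Hj; first by rewrite f0 cong_refl.
  have [_ C2] := edge_cong (Hed j (ltnW Hj)).
  exact: cong_trans (C2 (Hnr j.+1 (ltn0Sn _) Hj)) (IH (ltnW Hj)).
have Hk : (k.-1 < k)%N by lia.
have [C1 _] := edge_cong (Hed _ Hk).
rewrite prednK // fk in C1.
exact: cong_trans (C1 Hred) (C _ Hk).
Qed.

Lemma phi_iter v m k f : (forall j, (j < k)%N -> little_edge n v (f j) (f j.+1)) ->
  f 0%N = m -> forall j, (j <= k)%N -> f j = iter j (sigma v) m.
Proof.
move=> Hed f0; elim=> [|j IH] Hj; first by rewrite f0.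
have E := Hed j Hj.
rewrite /= -IH; last lia.
apply: (succ_uniq E); apply: sigma_spec.
by case: E.
Qed.

Lemma phi_unique v m m1 m2 : phi_rel n v m m1 -> phi_rel n v m m2 -> m1 = m2.
Proof.
move=> [k1 [f [k10 [f0 [fk [Hed [Hnr Hred]]]]]]] [k2 [g [k20 [g0 [gk [Ged [Gnr Gred]]]]]]].
have Ef := phi_iter Hed f0; have Eg := phi_iter Ged g0.
case: (ltngtP k1 k2) => H.
- exfalso; apply: (Gnr k1) => //.
  by rewrite Eg ?(ltnW H) // -Ef // fk.
- exfalso; apply: (Hnr k2) => //.
  by rewrite Ef ?(ltnW H) // -Eg // gk.
- by rewrite -fk -gk Ef // Eg // H.
Qed.

Lemma phi_back v m0 m1 m' : phi_rel n v m0 m' -> phi_rel n v m1 m' ->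
  reduced n m0.1 -> reduced n m1.1 -> m0 = m1.
Proof.
move=> [k0 [f [k00 [f0 [fk [Hed [Hnr Hred]]]]]]] [k1 [g [k10 [g0 [gk [Ged [Gnr Gred]]]]]]] R0 R1.
have E : forall t, (t <= minn k0 k1)%N -> f (k0 - t)%N = g (k1 - t)%N.
  elim=> [|t IH] Ht; first by rewrite !subn0 fk gk.
  apply: (pred_uniq (v := v) (m' := f (k0 - t)%N)).
    have -> : (k0 - t = (k0 - t.+1).+1)%N by lia.
    apply: Hed; lia.
  rewrite IH; last lia.
  have -> : (k1 - t = (k1 - t.+1).+1)%N by lia.
  apply: Ged; lia.
case: (ltngtP k0 k1) => H.
- exfalso; apply: (Gnr (k1 - k0)%N); [lia|lia|].
  rewrite -E; last by rewrite /minn H.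
  by rewrite subnn f0.
- exfalso; apply: (Hnr (k0 - k1)%N); [lia|lia|].
  rewrite E; last by rewrite /minn ltnNge (ltnW H).
  by rewrite subnn g0.
- have := E k0; rewrite subnn -H subnn f0 g0; apply; rewrite H minnn //.
Qed.

Lemma ex_min (P : nat -> Prop) p0 : P p0 -> exists p, P p /\ forall q, (q < p)%N -> ~ P q.
Proof.
elim/ltn_ind: p0 => p IH Hp.
case: (classic (exists q, (q < p)%N /\ P q)) => [[q [qp Hq]]|H].
  exact: (IH q).
exists p; split => // q qp Hq; apply: H; by exists q.
Qed.

Lemma phi_exists v m : marked n v m -> reduced n m.1 -> exists m', phi_rel n v m m'.
Proof.
move=> Hm Hr.
have [N [N0 EN]] := orbit Hm.
have HN : (fun p => (0 < p)%N /\ reduced n (iter p (sigma v) m).1) N by rewrite /= EN.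
have [p [[p0 Rp] Hmin]] := @ex_min (fun p => (0 < p)%N /\ reduced n (iter p (sigma v) m).1) N HN.
exists (iter p (sigma v) m), p, (fun j => iter j (sigma v) m); split => //; split => //; split => //.
split; first by move=> j _; apply: iter_edge.
split => // j j0 jp Rj; exact: (Hmin j jp (conj j0 Rj)).
Qed.

Lemma phi_pre v m' : marked n v m' -> reduced n m'.1 ->
  exists m, marked n v m /\ reduced n m.1 /\ phi_rel n v m m'.
Proof.
move=> Hm Hr.
have [N [N0 EN]] := orbit Hm.
have HN : (fun t => (0 < t)%N /\ (t <= N)%N /\ reduced n (iter (N - t) (sigma v) m').1) N.
  by rewrite /= subnn.
have [t [[t0 [tN Rt]] Hmin]] := @ex_min (fun t => (0 < t)%N /\ (t <= N)%N /\ reduced n (iter (N - t) (sigma v) m').1) N HN.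
set p := (N - t)%N.
exists (iter p (sigma v) m'); split; first by case: (iter_marked p Hm).
split => //.
exists t, (fun j => iter (p + j) (sigma v) m'); split => //; split; first by rewrite addn0.
split; first by rewrite /p subnK // EN.
split.
  by move=> j _; rewrite addnS; apply: iter_edge.
split => // j j0 jt Rj.
apply: (Hmin (t - j)%N); first lia.
split; first lia; split; first lia.
by have -> : (N - (t - j) = p + j)%N by rewrite /p; lia.
Qed.

Lemma length_red u w : redword_of n u w -> length_is n w (size u).
Proof. by move=> [Hr Hm]; split => //; exists u. Qed.

Lemma tref_eq_plus L U r s : (forall x, tref n L U x = tref n r s x) ->
  L < U -> r < s -> cong n r L.
Proof.
move=> E LU rs; have := E r; rewrite tref_p.
case: (boolP (cong n r L)) => // H1.
case: (boolP (cong n r U)) => H2.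
  by rewrite tref2 //; lia.
by rewrite tref3 //; lia.
Qed.

Lemma tref_eq_minus L U r s : (forall x, tref n L U x = tref n s r x) ->
  L < U -> s < r -> ~~ cong n s r -> cong n r U.
Proof.
move=> E LU sr nsr; have := E r; rewrite tref_q //.
case: (boolP (cong n r L)) => H1.
  by rewrite tref1 //; lia.
case: (boolP (cong n r U)) => // H2.
by rewrite tref3 //; lia.
Qed.

Lemma marked_elem v m x : marked n v m -> weval n m.1 x = v (tref n (mL m.1 m.2) (mU m.1 m.2) x).
Proof.
case: m => a i [Hok [Hi [[_ Hv] _]]] /=.
by rewrite (elem_m x Hi) Hv.
Qed.

Lemma plus_cong v r m : RPsi_plus n v r m -> cong n r (mL m.1 m.2).
Proof.
move=> [Hr [[_ [s [rs [_ Hs]]]] Hm]].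
have [LU _] := orient Hr (proj1 (proj2 Hm)) (proj2 (proj2 Hm)).
apply: (tref_eq_plus _ LU rs) => x.
apply: (red_inj (proj2 (proj2 Hm))).
by rewrite -marked_elem // Hs.
Qed.

Lemma minus_cong v r m : RPsi_minus n v r m -> cong n r (mU m.1 m.2).
Proof.
move=> [Hr [[_ [s [sr [nsr Hs]]]] Hm]].
have [LU _] := orient Hr (proj1 (proj2 Hm)) (proj2 (proj2 Hm)).
apply: (tref_eq_minus _ LU sr nsr) => x.
apply: (red_inj (proj2 (proj2 Hm))).
by rewrite -marked_elem // Hs.
Qed.

Lemma covers_m v m : marked n v m -> reduced n m.1 -> covers n v (weval n m.1).
Proof.
case: m => a i Hm Hr; have := Hm; move=> [Hok [Hi Rv]] /=.
split.
  exists (mL a i), (mU a i); split; first exact: LU_ncong_m.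
  by move=> x; apply: (marked_elem x Hm).
exists (size (delete a i)); split; first exact: length_red.
by rewrite -size_delete_lt //; apply: length_red.
Qed.

Lemma make_minus v r m : marked n v m -> reduced n m.1 -> cong n r (mU m.1 m.2) ->
  RPsi_minus n v r m.
Proof.
move=> Hm Hr Hc; split => //; split => //; split; first exact: covers_m.
have [LU _] := orient Hr (proj1 (proj2 Hm)) (proj2 (proj2 Hm)).
move/congE: Hc => [k Hk].
exists (mL m.1 m.2 + k * n%:Z); split; first lia.
split.
  rewrite Hk cong_shift cong_sym_eq cong_shift cong_sym_eq; exact: LU_ncong_m.
move=> x; rewrite (marked_elem x Hm) Hk; congr v.
apply: tref_shift; first by rewrite cong_sym_eq cong_shift cong_refl.
lia.
Qed.

Lemma make_plus v r m : marked n v m -> reduced n m.1 -> cong n r (mL m.1 m.2) ->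
  RPsi_plus n v r m.
Proof.
move=> Hm Hr Hc; split => //; split => //; split; first exact: covers_m.
have [LU _] := orient Hr (proj1 (proj2 Hm)) (proj2 (proj2 Hm)).
move/congE: Hc => [k Hk].
exists (mU m.1 m.2 + k * n%:Z); split; first lia.
split.
  rewrite Hk cong_shift cong_sym_eq cong_shift cong_sym_eq; exact: LU_ncong_m.
move=> x; rewrite (marked_elem x Hm) Hk; congr v.
apply: tref_shift; first by rewrite cong_sym_eq cong_shift cong_refl.
lia.
Qed.

Lemma phi_end v m m' : phi_rel n v m m' -> marked n v m' /\ reduced n m'.1.
Proof.
move=> [k [f [k0 [f0 [fk [Hed [Hnr Hred]]]]]]]; split => //.
have Hk : (k.-1 < k)%N by lia.
have := edge_marked (Hed _ Hk); by rewrite prednK // fk.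
Qed.

End Aff.

Theorem theorem11 (n : nat) (v : int -> int) (r : int) :
  (2 <= n)%N -> in_affS n v ->
  (forall m, RPsi_plus n v r m ->
     (exists m', phi_rel n v m m') /\
     (forall m1 m2, phi_rel n v m m1 -> phi_rel n v m m2 -> m1 = m2) /\
     (forall m', phi_rel n v m m' -> RPsi_minus n v r m')) /\
  (forall m', RPsi_minus n v r m' ->
     exists m, RPsi_plus n v r m /\ phi_rel n v m m' /\
       forall m0, RPsi_plus n v r m0 -> phi_rel n v m0 m' -> m0 = m).
Proof.
move=> n2 _; split.
- move=> m Hp; have [Hr [_ Hm]] := Hp.
  split; first exact: (phi_exists n2 Hm Hr).
  split; first by move=> m1 m2 H1 H2; apply: (phi_unique n2 H1 H2).
  move=> m' Hphi.
  have [Hm' Hr'] := phi_end n2 Hphi.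
  apply: (make_minus n2 Hm' Hr').
  exact: cong_trans (plus_cong n2 Hp) (cong_sym (inv_phi n2 Hphi)).
- move=> m' Hm'; have [Hr' [_ Hmk']] := Hm'.
  have [m [Hm [Hr Hphi]]] := phi_pre n2 Hmk' Hr'.
  exists m; split.
    apply: (make_plus n2 Hm Hr).
    exact: cong_trans (minus_cong n2 Hm') (inv_phi n2 Hphi).
  split => // m0 [Hr0 _] H0.
  exact: (phi_back n2 H0 Hphi Hr0 Hr).
Qed.
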